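(* For every $f\in\mathcal{F}_3$ and every $\mathbf{x}\in[0,1]^3$, $$f^{++}(\mathbf{x})=h(\mathbf{x})+\max_{\omega\in\{\underline\omega,\overline\omega\}}(g_2-g_1)\,\omega,$$ where, letting $x_{i^\star}\le x_{j^\star}\le x_{k^\star}$ denote the coordinates of $\mathbf{x}$ in nondecreasing order ($\{i^\star,j^\star,k^\star\}=\{1,2,3\}$), $\underline\omega=\max\big[(1-x_{k^\star})(1-x_{i^\star}-x_{j^\star}),\,0\big]$, $\overline\omega=\min\big[\prod_{i=1}^3x_i+\prod_{i=1}^3(1-x_i),\,(1-x_{j^\star})(1-x_{k^\star})\big]$, $g_1=1+f(1)+f(2)+f(3)$, $g_2=f(1,2)+f(1,3)+f(2,3)$, and $h(\mathbf{x})=\sum_{i=1}^3x_if(i)-\sum_{1\le i<j\le3}x_ix_j\big[f(i)+f(j)-f(i,j)\big]-(g_2-g_1)\big[\prod_{i=1}^3x_i+\prod_{i=1}^3(1-x_i)\big]$.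
   Context: $[n]=\{1,\dots,n\}$. A set function $f:2^{[n]}\to\mathbb{R}_+$ is monotone if $f(S)\le f(T)$ for $S\subseteq T$, submodular if $f(S)+f(T)\ge f(S\cap T)+f(S\cup T)$. $\mathcal{F}_n$ is the set of monotone submodular $f:2^{[n]}\to\mathbb{R}_+$ with $f(\emptyset)=0$, $f([n])=1$. Write $f(i)=f(\{i\})$, $f(i,j)=f(\{i,j\})$. For $\mathbf{x}\in[0,1]^n$, the upper pairwise independent extension is $f^{++}(\mathbf{x})=\max\sum_{S\subseteq[n]}\theta(S)f(S)$ over $\theta:2^{[n]}\to\mathbb{R}_{\ge0}$ with $\sum_S\theta(S)=1$, $\sum_{S\ni i}\theta(S)=x_i$ for all $i$, and $\sum_{S\ni i,j}\theta(S)=x_ix_j$ for all $i<j$. *)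

(* Defs.v *)
From mathcomp Require Import all_boot all_order all_algebra.
From mathcomp Require Import all_classical all_reals.
Set Implicit Arguments. Unset Strict Implicit. Unset Printing Implicit Defensive.
Import Order.TTheory GRing.Theory Num.Theory.
Local Open Scope ring_scope.
Local Open Scope classical_set_scope.

Section Defs.
Variable R : realType.

Definition in_Fn (n : nat) (f : {set 'I_n} -> R) : Prop :=
  [/\ (forall S, 0 <= f S),
      (forall S T : {set 'I_n}, S \subset T -> f S <= f T),
      (forall S T : {set 'I_n}, f (S :&: T) + f (S :|: T) <= f S + f T),
      f finset.set0 = 0 & f (finset.setTfor 'I_n) = 1].

Definition pw_feasible (n : nat) (x : 'I_n -> R) (theta : {set 'I_n} -> R) : Prop :=
  [/\ (forall S, 0 <= theta S),
      \sum_(S : {set 'I_n}) theta S = 1,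
      (forall i, \sum_(S : {set 'I_n} | i \in S) theta S = x i) &
      (forall i j : 'I_n, (i < j)%N ->
         \sum_(S : {set 'I_n} | (i \in S) && (j \in S)) theta S = x i * x j)].

Definition fpp (n : nat) (f : {set 'I_n} -> R) (x : 'I_n -> R) : R :=
  sup [set v : R | exists theta, pw_feasible x theta /\
                                 v = \sum_(S : {set 'I_n}) theta S * f S].
End Defs.

(* Main.v *)
Require Import Defs.
From mathcomp Require Import all_boot all_order all_algebra.
From mathcomp Require Import all_classical all_reals.
From mathcomp Require Import perm ring lra.
Import Order.TTheory GRing.Theory Num.Theory.
Local Open Scope ring_scope.

Lemma ord3 (i : 'I_3) : i = 0 \/ i = 1 \/ i = 2.
Proof. case: i => [[|[|[|//]]] H]; [left|right;left|right;right]; exact: val_inj. Qed.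

Definition code3 (S : {set 'I_3}) := (0 \in S, 1 \in S, 2 \in S).

Lemma code3_inj : injective code3.
Proof.
move=> A B [HA HB HC]; apply/setP => w; case: (ord3 w) => [->|[->|->]]; by [].
Qed.

Ltac dist := rewrite -?(inj_eq code3_inj) /code3 ?inE.

Lemma sumsets (R : nmodType) (F : {set 'I_3} -> R) :
  \sum_(S : {set 'I_3}) F S = F finset.set0 + F [set 0] + F [set 1] + F [set 2]
     + F [set 0; 1] + F [set 0; 2] + F [set 1; 2] + F [set: 'I_3].
Proof.
rewrite (bigD1 finset.set0) // (bigD1 [set 0]) /=; last by dist.
rewrite (bigD1 [set 1]) /=; last by dist.
rewrite (bigD1 [set 2]) /=; last by dist.
rewrite (bigD1 [set 0; 1]) /=; last by dist.
rewrite (bigD1 [set 0; 2]) /=; last by dist.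
rewrite (bigD1 [set 1; 2]) /=; last by dist.
rewrite (bigD1 [set: 'I_3]) /=; last by dist.
rewrite big_pred0 ?addr0 ?addrA //.
move=> S; rewrite -!(inj_eq code3_inj) /code3 !inE.
by case: (0 \in S); case: (1 \in S); case: (2 \in S).
Qed.

Lemma sum3 (R : nmodType) (F : 'I_3 -> R) : \sum_(i < 3) F i = F 0 + F 1 + F 2.
Proof.
rewrite !big_ord_recl big_ord0 addr0 addrA.
have -> : (lift ord0 ord0 : 'I_3) = 1 by exact: val_inj.
have -> : (lift ord0 (lift ord0 ord0) : 'I_3) = 2 by exact: val_inj.
by [].
Qed.

Lemma sum3c (R : nmodType) (P : pred 'I_3) (F : 'I_3 -> R) :
  \sum_(i < 3 | P i) F i = (if P 0 then F 0 else 0) + (if P 1 then F 1 else 0) + (if P 2 then F 2 else 0).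
Proof. by rewrite big_mkcond sum3. Qed.

Lemma prod3 (R : comNzRingType) (F : 'I_3 -> R) : \prod_(i < 3) F i = F 0 * F 1 * F 2.
Proof.
rewrite !big_ord_recl big_ord0 mulr1 mulrA.
have -> : (lift ord0 ord0 : 'I_3) = 1 by exact: val_inj.
have -> : (lift ord0 (lift ord0 ord0) : 'I_3) = 2 by exact: val_inj.
by [].
Qed.

Lemma e01 : ((0 : 'I_3) == 1) = false. Proof. by []. Qed.
Lemma e02 : ((0 : 'I_3) == 2) = false. Proof. by []. Qed.
Lemma e10 : ((1 : 'I_3) == 0) = false. Proof. by []. Qed.
Lemma e12 : ((1 : 'I_3) == 2) = false. Proof. by []. Qed.
Lemma e20 : ((2 : 'I_3) == 0) = false. Proof. by []. Qed.
Lemma e21 : ((2 : 'I_3) == 1) = false. Proof. by []. Qed.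
Definition eqs3 := (e01, e02, e10, e12, e20, e21, eqxx).

Lemma feas_vals (R : realType) (x : 'I_3 -> R) th : pw_feasible x th ->
 let T := th [set: 'I_3] in
 th [set 0;1] = x 0 * x 1 - T/\ th [set 0;2] = x 0 * x 2 - T /\
     th [set 1;2] = x 1 * x 2 - T /\
     th [set 0] = x 0 - x 0 * x 1 - x 0 * x 2 + T /\
     th [set 1] = x 1 - x 0 * x 1 - x 1 * x 2 + T /\
     th [set 2] = x 2 - x 0 * x 2 - x 1 * x 2 + T /\
     th finset.set0 = 1 - x 0 - x 1 - x 2 + x 0 * x 1 + x 0 * x 2 + x 1 * x 2 - T.
Proof.
case=> _ Hs Hm Hp T; rewrite /T.
have p01 := Hp 0 1 isT; have p02 := Hp 0 2 isT; have p12 := Hp 1 2 isT.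
have m0 := Hm 0; have m1 := Hm 1; have m2 := Hm 2.
rewrite big_mkcond sumsets !inE !eqs3 /= in p01.
rewrite big_mkcond sumsets !inE !eqs3 /= in p02.
rewrite big_mkcond sumsets !inE !eqs3 /= in p12.
rewrite big_mkcond sumsets !inE !eqs3 /= in m0.
rewrite big_mkcond sumsets !inE !eqs3 /= in m1.
rewrite big_mkcond sumsets !inE !eqs3 /= in m2.
rewrite sumsets in Hs.
by do ![split]; lra.
Qed.

Definition feasW {R : realType} (a b c w : R) :=
 let P := a*b*c + (1-a)*(1-b)*(1-c) in
 0 <= w /\ P - a*b <= w /\ P - a*c <= w /\ P - b*c <= w /\ w <= P /\
 w <= (1-b)*(1-c) /\ w <= (1-a)*(1-c) /\ w <= (1-a)*(1-b).

Ltac mm := rewrite ?le_max ?ge_max ?le_min ?ge_min;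
  first [apply/andP; split; nra | apply/orP; left; nra | apply/orP; right; nra | nra].

Lemma num_core (R : realType) (a b c xi xj xk : R):
 0 <= a <= 1 -> 0 <= b <= 1 -> 0 <= c <= 1 ->
 (xi = a /\ xj = b /\ xk = c) \/ (xi = a /\ xj = c /\ xk = b) \/
 (xi = b /\ xj = a /\ xk = c) \/ (xi = b /\ xj = c /\ xk = a) \/
 (xi = c /\ xj = a /\ xk = b) \/ (xi = c /\ xj = b /\ xk = a) ->
 xi <= xj -> xj <= xk ->
 let P := a*b*c + (1-a)*(1-b)*(1-c) in
 let wlo := Num.max ((1-xk)*(1-xi-xj)) 0 in
 let whi := Num.min P ((1-xj)*(1-xk)) in
 (forall w, feasW a b c w -> wlo <= w <= whi) /\ feasW a b c wlo /\ feasW a b c whi.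
Proof.
move=> /andP[a0 a1] /andP[b0 b1] /andP[c0 c1] Hp Hij Hjk P wlo whi.
rewrite /wlo /whi /P /feasW {wlo whi P}.
have q1 : 0 <= a*b*c by rewrite !mulr_ge0.
have q2 : 0 <= (1-a)*(1-b)*(1-c) by rewrite !mulr_ge0 // subr_ge0.
case: Hp => [[-> [-> ->]]|[[-> [-> ->]]|[[-> [-> ->]]|[[-> [-> ->]]|[[-> [-> ->]]|[-> [-> ->]]]]]]] in Hij Hjk *.
all: split; [move=> w [h1 [h2 [h3 [h4 [h5 [h6 [h7 h8]]]]]]];
   apply/andP; split; mm | split; do 7?split; mm].
Qed.

Lemma perm6 (R : Type) (x : 'I_3 -> R) (s : {perm 'I_3}) :
 let a := x 0 in let b := x 1 in let c := x 2 in
 let xi := x (s 0) in let xj := x (s 1) in let xk := x (s 2) in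
 (xi = a /\ xj = b /\ xk = c) \/ (xi = a /\ xj = c /\ xk = b) \/
 (xi = b /\ xj = a /\ xk = c) \/ (xi = b /\ xj = c /\ xk = a) \/
 (xi = c /\ xj = a /\ xk = b) \/ (xi = c /\ xj = b /\ xk = a).
Proof.
move=> a b c xi xj xk; rewrite /xi /xj /xk /a /b /c.
have d01 : s 0 != s 1 by rewrite (inj_eq perm_inj).
have d02 : s 0 != s 2 by rewrite (inj_eq perm_inj).
have d12 : s 1 != s 2 by rewrite (inj_eq perm_inj).
case: (ord3 (s 0)) => [e0|[e0|e0]]; case: (ord3 (s 1)) => [e1|[e1|e1]];
  case: (ord3 (s 2)) => [e2|[e2|e2]]; rewrite ?e0 ?e1 ?e2 in d01 d02 d12 *;
  try by [].
all: do ?[by left; split; [|split] | right].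
all: by split; [|split].
Qed.

Lemma l00 : (nat_of_ord (0%R:'I_3) < nat_of_ord (0%R:'I_3))%N = false. Proof. by []. Qed.
Lemma l01 : (nat_of_ord (0%R:'I_3) < nat_of_ord (1%R:'I_3))%N = true. Proof. by []. Qed.
Lemma l02 : (nat_of_ord (0%R:'I_3) < nat_of_ord (2%R:'I_3))%N = true. Proof. by []. Qed.
Lemma l10 : (nat_of_ord (1%R:'I_3) < nat_of_ord (0%R:'I_3))%N = false. Proof. by []. Qed.
Lemma l11 : (nat_of_ord (1%R:'I_3) < nat_of_ord (1%R:'I_3))%N = false. Proof. by []. Qed.
Lemma l12 : (nat_of_ord (1%R:'I_3) < nat_of_ord (2%R:'I_3))%N = true. Proof. by []. Qed.
Lemma l20 : (nat_of_ord (2%R:'I_3) < nat_of_ord (0%R:'I_3))%N = false. Proof. by []. Qed.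
Lemma l21 : (nat_of_ord (2%R:'I_3) < nat_of_ord (1%R:'I_3))%N = false. Proof. by []. Qed.
Lemma l22 : (nat_of_ord (2%R:'I_3) < nat_of_ord (2%R:'I_3))%N = false. Proof. by []. Qed.
Definition lts3 := (l00, l01, l02, l10, l11, l12, l20, l21, l22).

Theorem mainTheorem6 (R : realType) (f : {set 'I_3} -> R) (x : 'I_3 -> R)
  (s : {perm 'I_3}) :
  in_Fn f ->
  (forall i, 0 <= x i <= 1) ->
  x (s ord0) <= x (s 1) -> x (s 1) <= x (s 2) ->
  let xi := x (s ord0) in let xj := x (s 1) in let xk := x (s 2) in
  let P := \prod_(i < 3) x i + \prod_(i < 3) (1 - x i) in
  let wlo := Num.max ((1 - xk) * (1 - xi - xj)) 0 in
  let whi := Num.min P ((1 - xj) * (1 - xk)) in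
  let g1 := 1 + \sum_(i < 3) f [set i] in
  let g2 := \sum_(i < 3) \sum_(j < 3 | (i < j)%N) f [set i; j] in
  let h := \sum_(i < 3) x i * f [set i]
           - \sum_(i < 3) \sum_(j < 3 | (i < j)%N)
               x i * x j * (f [set i] + f [set j] - f [set i; j])
           - (g2 - g1) * P in
  fpp f x = h + Num.max ((g2 - g1) * wlo) ((g2 - g1) * whi).
Proof.
rewrite (_ : (ord0 : 'I_3) = 0); last exact: val_inj.
move=> Hf Hx H1 H2 xi xj xk P wlo whi g1 g2 h.
case: Hf => _ _ _ f0 fT.
have EP : P = x 0 * x 1 * x 2 + (1 - x 0) * (1 - x 1) * (1 - x 2) by rewrite /P !prod3.
have Eg1 : g1 = 1 + (f [set 0] + f [set 1] + f [set 2]) by rewrite /g1 sum3.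
have Eg2 : g2 = f [set 0; 1] + f [set 0; 2] + f [set 1; 2].
  rewrite /g2 sum3 !sum3c !lts3 /=.
  by rewrite !(add0r, addr0).
have Eh : h = x 0 * f [set 0] + x 1 * f [set 1] + x 2 * f [set 2]
    - (x 0 * x 1 * (f [set 0] + f [set 1] - f [set 0; 1])
       + x 0 * x 2 * (f [set 0] + f [set 2] - f [set 0; 2])
       + x 1 * x 2 * (f [set 1] + f [set 2] - f [set 1; 2])) - (g2 - g1) * P.
  rewrite /h sum3 [X in _ - X - _]sum3 !sum3c !lts3 /=.
  by rewrite !(add0r, addr0).
have [Hin [Flo Fhi]] := @num_core R (x 0) (x 1) (x 2) (x (s 0)) (x (s 1)) (x (s 2)) (Hx 0) (Hx 1) (Hx 2) (@perm6 R x s) H1 H2.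
rewrite -EP -/wlo -/whi in Hin Flo Fhi.
clearbody xi xj xk wlo whi h g1 g2 P.
have value : forall th, pw_feasible x th ->
   \sum_(S : {set 'I_3}) th S * f S = h + (g2 - g1) * (P - th [set: 'I_3]).
  move=> th /feas_vals [v01 [v02 [v12 [v0 [v1 [v2 ve]]]]]].
  rewrite sumsets v01 v02 v12 v0 v1 v2 ve f0 fT Eh Eg1 Eg2 EP; ring.
have Hab := Hx 0; have Hb := Hx 1; have Hc := Hx 2.
move: Hab Hb Hc => /andP[a0 a1] /andP[b0 b1] /andP[c0 c1].
have ub : forall v, (exists th, pw_feasible x th /\ v = \sum_(S : {set 'I_3}) th S * f S) ->
    v <= h + Num.max ((g2 - g1) * wlo) ((g2 - g1) * whi).
  move=> v [th [Hth ->]]; rewrite (value th Hth).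
  have Hnn : forall S, 0 <= th S by case: Hth.
  have [v01 [v02 [v12 [v0 [v1 [v2 ve]]]]]] := @feas_vals R x th Hth.
  have n01 := Hnn [set 0; 1]; have n02 := Hnn [set 0; 2]; have n12 := Hnn [set 1; 2].
  have n0 := Hnn [set 0]; have n1 := Hnn [set 1]; have n2 := Hnn [set 2].
  have ne := Hnn finset.set0; have nT := Hnn [set: 'I_3].
  rewrite v01 v02 v12 v0 v1 v2 ve in n01 n02 n12 n0 n1 n2 ne.
  have FW : feasW (x 0) (x 1) (x 2) (P - th [set: 'I_3]).
    rewrite /feasW /= -EP.
    by do ?split; rewrite ?EP; nra.
  have /andP[lo hi] := Hin _ FW.
  rewrite lerD2l le_max.
  case: (lerP 0 (g2 - g1)) => hd; apply/orP; [right|left]; nra.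
have inS : exists th, pw_feasible x th /\
    h + Num.max ((g2 - g1) * wlo) ((g2 - g1) * whi) = \sum_(S : {set 'I_3}) th S * f S.
  pose w := if (g2 - g1) * wlo <= (g2 - g1) * whi then whi else wlo.
  have Fw : feasW (x 0) (x 1) (x 2) w by rewrite /w; case: ifP.
  have Mw : Num.max ((g2 - g1) * wlo) ((g2 - g1) * whi) = (g2 - g1) * w.
    rewrite /w; case: ifP => H; first by rewrite max_r.
    by rewrite max_l // ltW // ltNge H.
  pose T := P - w.
  pose th := fun S : {set 'I_3} => match code3 S with
    | (true, true, true) => T
    | (true, true, false) => x 0 * x 1 - T
    | (true, false, true) => x 0 * x 2 - T
    | (false, true, true) => x 1 * x 2 - T
    | (true, false, false) => x 0 - x 0 * x 1 - x 0 * x 2 + T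
    | (false, true, false) => x 1 - x 0 * x 1 - x 1 * x 2 + T
    | (false, false, true) => x 2 - x 0 * x 2 - x 1 * x 2 + T
    | (false, false, false) => 1 - x 0 - x 1 - x 2 + x 0 * x 1 + x 0 * x 2 + x 1 * x 2 - T
    end.
  have Hth : pw_feasible x th.
    move: Fw; rewrite /feasW /= -EP => [[q1 [q2 [q3 [q4 [q5 [q6 [q7 q8]]]]]]]].
    split.
    - move=> S; rewrite /th; case: (code3 S) => [[[] []] []]; rewrite /T; rewrite ?EP in q1 q2 q3 q4 q5 q6 q7 q8 *; nra.
    - rewrite sumsets /th /code3 !inE !eqs3 /=; ring.
    - move=> i; case: (ord3 i) => [->|[->|->]];
      rewrite big_mkcond sumsets /th /code3 !inE !eqs3 /=; ring.
    - move=> i j; case: (ord3 i) => [->|[->|->]]; case: (ord3 j) => [->|[->|->]];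
      rewrite ?lts3 // => _; rewrite big_mkcond sumsets /th /code3 !inE !eqs3 /=; ring.
  exists th; split => //.
  have Tth : th [set: 'I_3] = T by rewrite /th /code3 !inE.
  by rewrite (value th Hth) Tth Mw /T; ring.
rewrite /fpp; apply/le_anti/andP; split.
- apply: ge_sup; last by move=> v Hv; exact: ub.
  by exists (h + Num.max ((g2 - g1) * wlo) ((g2 - g1) * whi)).
- have hub : has_ubound [set v : R | exists theta, pw_feasible x theta /\
                                 v = \sum_(S : {set 'I_3}) theta S * f S].
    by exists (h + Num.max ((g2 - g1) * wlo) ((g2 - g1) * whi)) => v Hv; exact: ub.
  exact: (ub_le_sup hub inS).
Qed.
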